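(* Let $0<c<1$, let $(v^*,u^* )$ be the unique saddle point of $\min_v\max_u E(v,u)$, and let $$L_c(v,u)=\frac{\alpha}{2}\sum_s|v_s-v^*_s|^2+\tau\Big(\sum_{s,a}\Big(u^*_{sa}\log\frac{u^*_{sa}}{u_{sa}}+u_{sa}-u^*_{sa}\Big)+\frac{c}{1-c}\sum_s\Big(\tilde u^*_s\log\frac{\tilde u^*_s}{\tilde u_s}+\tilde u_s-\tilde u^*_s\Big)\Big).$$ Consider the interpolating natural gradient dynamics on $\mathbb{R}^{|S|}\times\mathbb{R}^{|S|\times|A|}_{>0}$: $$\frac{dv_{s'}}{dt}=-\Big(v_{s'}-\frac1\alpha\sum_{s,a}K_{ass'}u_{sa}\Big),\ s'\in S,$$ $$\frac{du_{s\cdot}}{dt}=-\tilde u_s\big(\mathrm{diag}(\pi_{s\cdot})-c\,\pi_{s\cdot}\pi_{s\cdot}^{\mathsf T}\big)\Big(\log\frac{u_{s\cdot}}{\tilde u_s}-\frac1\tau\Big(r_{s\cdot}-\sum_{s'}K_{\cdot ss'}v_{s'}\Big)\Big),\ s\in S,$$ where $\pi_{sa}=u_{sa}/\tilde u_s$. Then $L_c$ is a Lyapunov function for this dynamics: $\frac{dL_c}{dt}\le0$ along trajectories, and the only trajectory along which $\frac{dL_c}{dt}=0$ is the constant trajectory $(v,u)=(v^*,u^* )$.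
   Context: Finite MDP: state space $S$, action space $A$, transition probabilities $P_{ass'}$ (with $\sum_{s'}P_{ass'}=1$), rewards $r_{sa}\ge0$, discount $\gamma\in(0,1)$, regularization $\tau>0$, and $\alpha>0$. $K_{ass'}=\delta_{ss'}-\gamma P_{ass'}$, $\tilde u_s=\sum_a u_{sa}$. For fixed $s$, $u_{s\cdot},\pi_{s\cdot},r_{s\cdot}\in\mathbb{R}^{|A|}$ are the vectors indexed by $a$, $K_{\cdot ss'}\in\mathbb{R}^{|A|}$ has $a$-th entry $K_{ass'}$, logarithms and divisions of vectors are entrywise, and $\mathrm{diag}(x)$ is the diagonal matrix with diagonal $x$. $E(v,u)=\frac{\alpha}{2}\sum_s v_s^2+\sum_{s,a}u_{sa}(r_{sa}-\sum_{s'}K_{ass'}v_{s'})-\tau\sum_{s,a}u_{sa}\log(u_{sa}/\tilde u_s)$; this min-max problem has a unique saddle point $(v^*,u^* )$ with $u^*_{sa}>0$. *)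

(* Defs.v *)
From HB Require Import structures.
From mathcomp Require Import all_boot all_order all_algebra.
From mathcomp Require Import all_classical all_reals all_analysis.
Set Implicit Arguments. Unset Strict Implicit. Unset Printing Implicit Defensive.
Import Order.TTheory GRing.Theory Num.Theory.
Import numFieldNormedType.Exports.
Local Open Scope ring_scope.

Section MDP.
Variables (R : realType) (S A : finType).

(* P s a s' = P_{a s s'} : probability of moving from s to s' under action a *)
Definition Kmat (gamma : R) (P : S -> A -> S -> R) (s : S) (a : A) (s' : S) : R :=
  (s == s')%:R - gamma * P s a s'.

Definition utilde (u : S -> A -> R) (s : S) : R := \sum_(a : A) u s a.

Definition pol (u : S -> A -> R) (s : S) (a : A) : R := u s a / utilde u s.

Definition Efun (alpha tau gamma : R) (P : S -> A -> S -> R) (r : S -> A -> R)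
    (v : S -> R) (u : S -> A -> R) : R :=
  alpha / 2 * \sum_(s : S) v s ^+ 2
  + \sum_(s : S) \sum_(a : A)
      u s a * (r s a - \sum_(s' : S) Kmat gamma P s a s' * v s')
  - tau * \sum_(s : S) \sum_(a : A) u s a * ln (u s a / utilde u s).

Definition is_saddle (alpha tau gamma : R) (P : S -> A -> S -> R) (r : S -> A -> R)
    (vstar : S -> R) (ustar : S -> A -> R) : Prop :=
  (forall s a, 0 < ustar s a) /\
  (forall v : S -> R,
      Efun alpha tau gamma P r vstar ustar <= Efun alpha tau gamma P r v ustar) /\
  (forall u : S -> A -> R, (forall s a, 0 < u s a) ->
      Efun alpha tau gamma P r vstar u <= Efun alpha tau gamma P r vstar ustar).

Definition Lc (alpha tau c : R) (vstar : S -> R) (ustar : S -> A -> R)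
    (v : S -> R) (u : S -> A -> R) : R :=
  alpha / 2 * \sum_(s : S) (v s - vstar s) ^+ 2
  + tau * ( \sum_(s : S) \sum_(a : A)
              (ustar s a * ln (ustar s a / u s a) + u s a - ustar s a)
          + c / (1 - c) * \sum_(s : S)
              (utilde ustar s * ln (utilde ustar s / utilde u s)
               + utilde u s - utilde ustar s)).

Definition gvec (tau gamma : R) (P : S -> A -> S -> R) (r : S -> A -> R)
    (v : S -> R) (u : S -> A -> R) (s : S) (a : A) : R :=
  ln (u s a / utilde u s) - tau^-1 * (r s a - \sum_(s' : S) Kmat gamma P s a s' * v s').

Definition v_rhs (alpha gamma : R) (P : S -> A -> S -> R)
    (v : S -> R) (u : S -> A -> R) (s' : S) : R :=
  - (v s' - alpha^-1 * \sum_(s : S) \sum_(a : A) Kmat gamma P s a s' * u s a).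

(* right-hand side of the u-equation:
   - \tilde u_s (diag(pi_s) - c pi_s pi_s^T) g_s, written entrywise *)
Definition u_rhs (tau gamma c : R) (P : S -> A -> S -> R) (r : S -> A -> R)
    (v : S -> R) (u : S -> A -> R) (s : S) (a : A) : R :=
  - (utilde u s *
      (pol u s a * gvec tau gamma P r v u s a
       - c * pol u s a * \sum_(b : A) pol u s b * gvec tau gamma P r v u s b)).

Definition is_trajectory (alpha tau gamma c : R) (P : S -> A -> S -> R)
    (r : S -> A -> R) (t0 t1 : R) (v : R -> S -> R) (u : R -> S -> A -> R) : Prop :=
  forall t, t0 < t < t1 ->
    (forall s a, 0 < u t s a) /\
    (forall s', derivable (fun x => v x s') t 1 /\
                derive1 (fun x => v x s') t = v_rhs alpha gamma P (v t) (u t) s') /\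
    (forall s a, derivable (fun x => u x s a) t 1 /\
                derive1 (fun x => u x s a) t = u_rhs tau gamma c P r (v t) (u t) s a).

End MDP.

(* Main.v *)
Require Import Defs.
From HB Require Import structures.
From mathcomp Require Import all_boot all_order all_algebra.
From mathcomp Require Import all_classical all_reals all_analysis.
From mathcomp Require Import ring lra.
Import Order.TTheory GRing.Theory Num.Theory.
Import numFieldNormedType.Exports.
Local Open Scope ring_scope.

Section Dh.
Variable R : realType.
Implicit Types (f g : R -> R) (x : R).

Lemma isdD {f g x df dg} : is_derive x 1 f df -> is_derive x 1 g dg ->
  is_derive x 1 (fun y => f y + g y) (df + dg).
Proof. by move=> ? ?; exact: is_deriveD. Qed.

Lemma isdB {f g x df dg} : is_derive x 1 f df -> is_derive x 1 g dg ->
  is_derive x 1 (fun y => f y - g y) (df - dg).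
Proof. by move=> ? ?; exact: is_deriveB. Qed.

Lemma isdC (k : R) x : is_derive x 1 (fun _ : R => k) 0.
Proof. exact: is_derive_cst. Qed.

Lemma isdMl (k : R) {f x df} : is_derive x 1 f df ->
  is_derive x 1 (fun y => k * f y) (k * df).
Proof. move=> ?; exact: is_deriveZ. Qed.

Lemma isdM {f g x df dg} : is_derive x 1 f df -> is_derive x 1 g dg ->
  is_derive x 1 (fun y => f y * g y) (f x * dg + g x * df).
Proof. by move=> ? ?; exact: is_deriveM. Qed.

Lemma isd_sum (I : finType) (h : I -> R -> R) x (dh : I -> R) :
  (forall i, is_derive x 1 (h i) (dh i)) ->
  is_derive x 1 (fun y => \sum_i h i y) (\sum_i dh i).
Proof.
move=> H.
have -> : (fun y => \sum_i h i y) = (fun y => \sum_(i <- enum I) h i y).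
  by apply: funext => y; rewrite big_enum.
rewrite -big_enum /=.
elim: (enum I) => [|i s IH].
  have -> : (fun y => \sum_(i <- [::]) h i y) = (fun _ => 0).
    by apply: funext => y; rewrite big_nil.
  by rewrite big_nil; exact: isdC.
have -> : (fun y => \sum_(j <- i :: s) h j y) = (fun y => h i y + \sum_(j <- s) h j y).
  by apply: funext => y; rewrite big_cons.
by rewrite big_cons; apply: isdD.
Qed.

Lemma isd_sq f x df (b : R) : is_derive x 1 f df ->
  is_derive x 1 (fun y => (f y - b) ^+ 2) (2 * (f x - b) * df).
Proof.
move=> H.
have H2 := isdM (isdB H (isdC b x)) (isdB H (isdC b x)).
have -> : (fun y => (f y - b) ^+ 2) = (fun y => (f y - b) * (f y - b)).
  by apply: funext => y; rewrite expr2.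
by apply: is_derive_eq H2 _; ring.
Qed.

Lemma isd_kl f x df (a : R) : is_derive x 1 f df ->
  ((0 < a /\ 0 < f x) \/ ((forall y, f y = a) /\ df = 0)) ->
  is_derive x 1 (fun y => a * ln (a / f y) + f y - a) ((1 - a / f x) * df).
Proof.
move=> H [[a0 fx0]|[fa ->]]; last first.
  have -> : (fun y => a * ln (a / f y) + f y - a) = (fun _ => a * ln (a / a) + a - a).
    by apply: funext => y; rewrite fa.
  by rewrite mulr0; exact: isdC.
have fxn0 : f x != 0 by rewrite gt_eqF.
have H1 : is_derive x 1 (fun y => (f y)^-1) (- (f x) ^- 2 *: df) by exact: is_deriveV.
have H2 := isdMl a H1.
have H3 : is_derive x 1 ((@ln R) \o (fun y => a * (f y)^-1)) ((a * (f x)^-1)^-1 * (a * (- (f x) ^- 2 *: df))).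
  apply: is_derive1_comp => //; apply: is_derive1_ln.
  by rewrite mulr_gt0 // invr_gt0.
have H4 := isdB (isdD (isdMl a H3) H) (isdC a x).
apply: is_derive_eq H4 _.
rewrite subr0.
rewrite -[ _ *: _]/(_ * _).
field; by rewrite fxn0 gt_eqF.
Qed.

End Dh.

Section Gibbs.
Variable R : realType.

Lemma ln_le_sub1 (x : R) : 0 < x -> ln x <= x - 1.
Proof.
move=> x0; have := expR_ge1Dx (ln x); rewrite lnK ?posrE // => h; lra.
Qed.

Lemma ln_eq_sub1 (x : R) : 0 < x -> ln x = x - 1 -> x = 1.
Proof.
move=> x0 hx; apply/eqP; rewrite -(ln_eq0 x0); apply/negPn/negP => hn.
have := expR_gt1Dx hn; rewrite lnK ?posrE // hx; lra.
Qed.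

Lemma sum_pos (A : finType) (w : A -> R) (a : A) :
  (forall b, 0 < w b) -> 0 < \sum_b w b.
Proof.
move=> hw; rewrite (bigD1 a) //=; apply: ltr_wpDr; last exact: hw.
by apply: sumr_ge0 => b _; apply: ltW.
Qed.

Variable A : finType.
Variable tau : R.
Hypothesis htau : 0 < tau.

Definition Gs (w c : A -> R) : R :=
  \sum_a w a * c a - tau * \sum_a w a * ln (w a / \sum_b w b).

Lemma Gs_hom (k : R) (w c : A -> R) : 0 < k ->
  Gs (fun a => k * w a) c = k * Gs w c.
Proof.
move=> k0; rewrite /Gs -mulr_sumr.
have -> : \sum_a k * w a * c a = k * \sum_a w a * c a.
  by rewrite mulr_sumr; apply: eq_bigr => a _; rewrite mulrA.
have -> : \sum_a k * w a * ln (k * w a / (k * \sum_b w b))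
          = k * \sum_a w a * ln (w a / \sum_b w b).
  rewrite mulr_sumr; apply: eq_bigr => a _; rewrite -mulrA; congr (_ * (_ * ln _)).
  rewrite invfM mulrACA mulfV ?mul1r //; by rewrite gt_eqF.
ring.
Qed.

Lemma gibbs_opt (w0 c : A -> R) : (forall a, 0 < w0 a) ->
  (forall w, (forall a, 0 < w a) -> Gs w c <= Gs w0 c) ->
  forall a, tau * ln (w0 a / \sum_b w0 b) = c a.
Proof.
move=> hw0 hmax a.
have G0 : Gs w0 c = 0.
  have two0 : (0:R) < 2 by lra.
  have itwo0 : (0:R) < 2^-1 by rewrite invr_gt0.
  have h2 := hmax (fun a => 2 * w0 a) (fun b => mulr_gt0 two0 (hw0 b)).
  have h12 := hmax (fun a => 2^-1 * w0 a) (fun b => mulr_gt0 itwo0 (hw0 b)).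
  rewrite Gs_hom // in h2; rewrite Gs_hom ?invr_gt0 // in h12; lra.
pose q b := expR (c b / tau).
have hq : forall b, 0 < q b by move=> b; exact: expR_gt0.
pose Z := \sum_b q b.
have Z0 : 0 < Z by exact: sum_pos.
have lnZ : ln Z <= 0.
  have hGq := hmax q hq.
  have eGq : Gs q c = tau * Z * ln Z.
    have -> : tau * Z * ln Z = \sum_b (q b * c b - tau * (q b * ln (q b / Z))).
      rewrite {1}/Z mulr_sumr mulr_suml; apply: eq_bigr => b _.
      rewrite ln_div; [|by rewrite posrE|by rewrite posrE].
      rewrite expRK; move: (q b) (ln Z) => qb lZ. field; exact: lt0r_neq0.
    by rewrite /Gs sumrB mulr_sumr.
  by rewrite eGq G0 pmulr_rle0 ?mulr_gt0 // in hGq.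
have Z1 : Z <= 1 by rewrite leNgt; apply/negP => /ln_gt0; lra.
pose W := \sum_b w0 b.
have W0 : 0 < W by exact: sum_pos.
pose pi b := w0 b / W.
have hpi : forall b, 0 < pi b by move=> b; rewrite divr_gt0.
pose x b := q b / pi b.
have hx : forall b, 0 < x b by move=> b; rewrite divr_gt0.
pose sl b := tau * w0 b * ((x b - 1) - ln (x b)).
have sl0 : forall b, 0 <= sl b.
  move=> b; apply: mulr_ge0; first by rewrite mulr_ge0 // ltW.
  by rewrite subr_ge0 (ln_le_sub1 _ (hx b)).
have slsum : \sum_b sl b = tau * W * Z - tau * W - Gs w0 c.
  have -> : \sum_b sl b = \sum_b (tau * W * q b - tau * w0 b
                   - (w0 b * c b - tau * (w0 b * ln (w0 b / W)))).
    apply: eq_bigr => b _; rewrite /sl /x ln_div ?posrE // expRK /pi.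
    field; by rewrite !gt_eqF.
  by rewrite !sumrB -!mulr_sumr.
have : \sum_b sl b = 0.
  apply/le_anti/andP; split; last by apply: sumr_ge0 => b _.
  rewrite slsum G0 subr0 -{2}(mulr1 (tau * W)) -mulrBr pmulr_rle0 ?mulr_gt0 //; lra.
move/(psumr_eq0P (fun b _ => sl0 b))/(_ a isT).
rewrite /sl => /eqP; rewrite !mulf_eq0 (gt_eqF htau) (gt_eqF (hw0 a)) /= subr_eq0 => /eqP h.
have xa1 := ln_eq_sub1 _ (hx a) (esym h).
have : pi a = q a.
  move: xa1; rewrite /x => /(congr1 (fun y => y * pi a)); rewrite mul1r mulfVK ?lt0r_neq0 // => ->.
rewrite /pi /W => ->; rewrite /q expRK; field; by rewrite gt_eqF.
Qed.

End Gibbs.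
Arguments Gs {R A} tau w c.
Arguments gibbs_opt {R A tau} htau w0 c.
Arguments ln_le_sub1 {R x}.
Arguments ln_eq_sub1 {R x}.
Arguments sum_pos {R A w} a.

Section MDP2.
Variables (R : realType) (S A : finType).
Variables (P : S -> A -> S -> R) (r : S -> A -> R) (gamma tau alpha c : R).
Hypothesis htau : 0 < tau.
Hypothesis halpha : 0 < alpha.
Hypothesis hc1 : 1 - c != 0.
Variables (vstar : S -> R) (ustar : S -> A -> R).
Hypothesis hsad : is_saddle alpha tau gamma P r vstar ustar.

Local Notation K := (Kmat gamma P).

Lemma sum_exch (x : S -> A -> R) (w : S -> R) :
  \sum_s \sum_a x s a * (\sum_s' K s a s' * w s')
  = \sum_s' w s' * (\sum_s \sum_a K s a s' * x s a).
Proof.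
under eq_bigr => s _ do under eq_bigr => a _ do rewrite mulr_sumr.
under eq_bigr => s _ do rewrite exchange_big.
rewrite exchange_big; apply: eq_bigr => s' _; rewrite mulr_sumr.
apply: eq_bigr => s _; rewrite mulr_sumr; apply: eq_bigr => a _; ring.
Qed.

Definition bvec (u : S -> A -> R) s' := \sum_s \sum_a K s a s' * u s a.

Lemma Efun_split v u : Efun alpha tau gamma P r v u =
  alpha / 2 * \sum_s v s ^+ 2 + \sum_s \sum_a u s a * r s a
  - \sum_s' v s' * bvec u s'
  - tau * \sum_(s : S) \sum_(a : A) u s a * ln (u s a / utilde u s).
Proof.
rewrite /Efun /bvec -sum_exch.
have -> : \sum_s \sum_a u s a * (r s a - \sum_s' K s a s' * v s')
   = \sum_s \sum_a u s a * r s a - \sum_s \sum_a u s a * (\sum_s' K s a s' * v s').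
  rewrite -sumrB; apply: eq_bigr => s _; rewrite -sumrB; apply: eq_bigr => a _.
  by rewrite mulrBr.
by rewrite addrA.
Qed.

Lemma F1 s' : alpha * vstar s' = bvec ustar s'.
Proof.
pose d s' := (alpha * vstar s' - bvec ustar s') / alpha.
have H := hsad.2.1 (fun s' => vstar s' - d s').
rewrite !Efun_split in H.
have key : alpha / 2 * \sum_s (vstar s - d s) ^+ 2 - \sum_s (vstar s - d s) * bvec ustar s
   = alpha / 2 * \sum_s vstar s ^+ 2 - \sum_s vstar s * bvec ustar s
     - alpha / 2 * \sum_s d s ^+ 2.
  rewrite !mulr_sumr -!sumrB; apply: eq_bigr => s _; rewrite /d.
  field; exact: lt0r_neq0.
have hd : alpha / 2 * \sum_s d s ^+ 2 <= 0 by lra.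
have hd0 : \sum_s d s ^+ 2 = 0.
  apply/le_anti/andP; split; last by apply: sumr_ge0 => s _; exact: sqr_ge0.
  by rewrite -(pmulr_rle0 _ (divr_gt0 halpha (ltr0Sn _ 1))).
have := @psumr_eq0P _ _ xpredT (fun s => d s ^+ 2) (fun s _ => sqr_ge0 (d s)) hd0 s' isT.
move/eqP; rewrite sqrf_eq0 /d mulf_eq0 invr_eq0 (gt_eqF halpha) orbF subr_eq0.
by move/eqP.
Qed.

Lemma Efun_G v u : Efun alpha tau gamma P r v u =
  alpha / 2 * \sum_s v s ^+ 2
  + \sum_s Gs tau (u s) (fun a => r s a - \sum_s' K s a s' * v s').
Proof. by rewrite /Efun /Gs /utilde sumrB -mulr_sumr addrA. Qed.

Lemma F2 s a : tau * ln (ustar s a / utilde ustar s)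
   = r s a - \sum_s' K s a s' * vstar s'.
Proof.
apply: (gibbs_opt htau (ustar s) (fun a => r s a - \sum_s' K s a s' * vstar s') (fun b => hsad.1 s b)) => w hw.
pose u' := fun s0 b => if s0 == s then w b else ustar s0 b.
have hu' : forall s0 b, 0 < u' s0 b.
  by move=> s0 b; rewrite /u'; case: (s0 == s) => //; exact: hsad.1.
have H := hsad.2.2 u' hu'.
pose C i := fun a => r i a - \sum_s' K i a s' * vstar s'.
have E : \sum_(i | i != s) Gs tau (u' i) (C i) = \sum_(i | i != s) Gs tau (ustar i) (C i).
  by apply: eq_bigr => i /negbTE hi; rewrite /u' hi.
have E1 : \sum_i Gs tau (u' i) (C i) = Gs tau w (C s) + \sum_(i | i != s) Gs tau (ustar i) (C i).
  rewrite (bigD1 s) //= E; congr (_ + _); by rewrite /u' eqxx.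
have E2 : \sum_i Gs tau (ustar i) (C i) = Gs tau (ustar s) (C s) + \sum_(i | i != s) Gs tau (ustar i) (C i).
  by rewrite (bigD1 s).
rewrite !Efun_G -/(C _) in H.
have E1' := E1; have E2' := E2; rewrite /C in E1' E2'.
rewrite E1' E2' in H; rewrite /C in H; lra.
Qed.



Lemma stepA (vv : S -> R) (uu : S -> A -> R) s :
  (forall a, 0 < uu s a) -> (0 < utilde uu s \/ (A -> False)) ->
  \sum_a (1 - ustar s a / uu s a) * u_rhs tau gamma c P r vv uu s a
  + c / (1 - c) * ((1 - utilde ustar s / utilde uu s) * \sum_a u_rhs tau gamma c P r vv uu s a)
  = - \sum_a (uu s a - ustar s a) * gvec tau gamma P r vv uu s a.
Proof.
move=> hu [U0|hA]; last first.
  have e0 : forall F : A -> R, \sum_a F a = 0.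
    by move=> F; apply: big1 => a; case: (hA a).
  rewrite !e0; ring.
set g := gvec tau gamma P r vv uu s.
set U := utilde uu s.
set m := \sum_b pol uu s b * g b.
have hU : U != 0 by exact: lt0r_neq0.
have du : forall a, u_rhs tau gamma c P r vv uu s a = -(uu s a * g a - c * m * uu s a).
  move=> a; rewrite /u_rhs /pol -/U -/g -/m; field; exact: hU.
have Um : \sum_a uu s a * g a = U * m.
  rewrite /m mulr_sumr; apply: eq_bigr => a _; rewrite /pol -/U; field; exact: hU.
have sdu : \sum_a u_rhs tau gamma c P r vv uu s a = - ((1 - c) * U * m).
  rewrite (eq_bigr _ (fun a _ => du a)) sumrN sumrB -mulr_sumr Um.
  rewrite /U /utilde; ring.
have s1 : \sum_a (1 - ustar s a / uu s a) * u_rhs tau gamma c P r vv uu s a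
   = - \sum_a (uu s a - ustar s a) * g a + c * m * (U - utilde ustar s).
  have -> : \sum_a (1 - ustar s a / uu s a) * u_rhs tau gamma c P r vv uu s a
     = \sum_a (- ((uu s a - ustar s a) * g a) + c * m * (uu s a - ustar s a)).
    apply: eq_bigr => a _; rewrite du; field; exact: lt0r_neq0.
  by rewrite big_split /= sumrN -mulr_sumr sumrB.
rewrite s1 sdu; field; by rewrite hU hc1.
Qed.

Lemma bvecB (x y : S -> A -> R) s' :
  bvec (fun s a => x s a - y s a) s' = bvec x s' - bvec y s'.
Proof.
rewrite /bvec -sumrB; apply: eq_bigr => s _; rewrite -sumrB; apply: eq_bigr => a _.
by rewrite mulrBr.
Qed.

Definition klterm (uu : S -> A -> R) s a :=
  (uu s a - ustar s a) * (tau * (ln (uu s a / utilde uu s) - ln (ustar s a / utilde ustar s))).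

Lemma deriv_eq (vv : S -> R) (uu : S -> A -> R) :
  (forall s a, 0 < uu s a) -> (forall s, 0 < utilde uu s \/ (A -> False)) ->
  alpha / 2 * \sum_s (2 * (vv s - vstar s) * v_rhs alpha gamma P vv uu s)
  + tau * (\sum_s \sum_a (1 - ustar s a / uu s a) * u_rhs tau gamma c P r vv uu s a
      + c / (1 - c) * \sum_s ((1 - utilde ustar s / utilde uu s)
                               * \sum_a u_rhs tau gamma c P r vv uu s a))
  = - (alpha * \sum_s (vv s - vstar s) ^+ 2) - \sum_s \sum_a klterm uu s a.
Proof.
move=> hu hU.
pose X s' := bvec (fun s a => uu s a - ustar s a) s'.
have hv : forall s', alpha / 2 * (2 * (vv s' - vstar s') * v_rhs alpha gamma P vv uu s')
    = - (alpha * (vv s' - vstar s') ^+ 2) + (vv s' - vstar s') * X s'.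
  move=> s'; rewrite /X bvecB -F1 /v_rhs -/(bvec uu s').
  field; exact: lt0r_neq0.
have hAB : \sum_s \sum_a (1 - ustar s a / uu s a) * u_rhs tau gamma c P r vv uu s a
      + c / (1 - c) * \sum_s ((1 - utilde ustar s / utilde uu s)
                               * \sum_a u_rhs tau gamma c P r vv uu s a)
    = \sum_s - \sum_a (uu s a - ustar s a) * gvec tau gamma P r vv uu s a.
  rewrite mulr_sumr -big_split; apply: eq_bigr => s _; apply: stepA => //.
have hg : forall s a, tau * gvec tau gamma P r vv uu s a
    = tau * (ln (uu s a / utilde uu s) - ln (ustar s a / utilde ustar s))
      + \sum_s' K s a s' * (vv s' - vstar s').
  move=> s a; rewrite /gvec.
  have e2 := F2 s a.
  have -> : \sum_s' K s a s' * (vv s' - vstar s')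
     = \sum_s' K s a s' * vv s' - \sum_s' K s a s' * vstar s'.
    by rewrite -sumrB; apply: eq_bigr => s' _; rewrite mulrBr.
  rewrite mulrBr (mulrBr tau (ln _)) e2 mulrA mulfV ?mul1r; last exact: lt0r_neq0.
  ring.
have hT : tau * \sum_s - \sum_a (uu s a - ustar s a) * gvec tau gamma P r vv uu s a
    = - (\sum_s \sum_a klterm uu s a) - \sum_s' (vv s' - vstar s') * X s'.
  rewrite /X /bvec -sum_exch mulr_sumr.
  rewrite -opprD -big_split /= -sumrN; apply: eq_bigr => s _.
  rewrite -big_split /= mulrN mulr_sumr; congr (- _); apply: eq_bigr => a _.
  by rewrite /klterm mulrCA hg mulrDr.
rewrite hAB hT mulr_sumr (eq_bigr _ (fun s _ => hv s)) big_split /= sumrN.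
rewrite [alpha * _]mulr_sumr; ring.
Qed.

Lemma kl_pt (p q : R) : 0 < p -> 0 < q ->
  0 <= p * (ln p - ln q) - (p - q) /\ (p * (ln p - ln q) - (p - q) = 0 -> p = q).
Proof.
move=> p0 q0.
have hl : ln (q / p) = ln q - ln p by rewrite ln_div ?posrE.
have qp0 : 0 < q / p by rewrite divr_gt0.
have le := ln_le_sub1 qp0.
have e : p * (ln p - ln q) - (p - q) = p * ((q / p - 1) - ln (q / p)).
  rewrite hl; field; exact: lt0r_neq0.
rewrite e; split.
  by apply: mulr_ge0; [exact: ltW | rewrite subr_ge0].

move/eqP; rewrite mulf_eq0 (gt_eqF p0) /= subr_eq0 => /eqP h.
have := ln_eq_sub1 qp0 (esym h).
move/(congr1 (fun y => y * p)); rewrite mul1r mulfVK ?lt0r_neq0 // => ->.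
Qed.

Lemma kl_state (uu : S -> A -> R) s : (forall a, 0 < uu s a) ->
  0 <= \sum_a klterm uu s a /\
  (\sum_a klterm uu s a = 0 -> forall a, uu s a / utilde uu s = ustar s a / utilde ustar s).
Proof.
move=> hu; case: (pickP (@predT A)) => [a0 _|hA]; last first.
  have e0 : \sum_a klterm uu s a = 0 by apply: big1 => a _; have := hA a.
  by rewrite e0; split => // _ a; have := hA a.
have hus : forall a, 0 < ustar s a by move=> a; exact: hsad.1.
set U := utilde uu s; set U' := utilde ustar s.
have U0 : 0 < U by exact: sum_pos a0 hu.
have U'0 : 0 < U' by exact: sum_pos a0 hus.
pose p a := uu s a / U; pose q a := ustar s a / U'.
have p0 : forall a, 0 < p a by move=> a; rewrite divr_gt0.
have q0 : forall a, 0 < q a by move=> a; rewrite divr_gt0.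
pose f1 a := p a * (ln (p a) - ln (q a)) - (p a - q a).
pose f2 a := q a * (ln (q a) - ln (p a)) - (q a - p a).
pose e a := tau * (U * f1 a + U' * f2 a).
have e0 : forall a, 0 <= e a.
  move=> a; apply: mulr_ge0; first exact: ltW.
  apply: addr_ge0; apply: mulr_ge0.
  - exact: ltW.
  - have := (kl_pt _ _ (p0 a) (q0 a)).1; by rewrite /f1.
  - exact: ltW.
  - have := (kl_pt _ _ (q0 a) (p0 a)).1; by rewrite /f2.
have ek : forall a, klterm uu s a = e a + tau * (U - U') * (p a - q a).
  move=> a; rewrite /klterm /e /f1 /f2 -/U -/U' -/(p a) -/(q a).
  have -> : uu s a = U * p a by rewrite /p; field; exact: lt0r_neq0.
  have -> : ustar s a = U' * q a by rewrite /q; field; exact: lt0r_neq0.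
  ring.
have sp : \sum_a p a = 1.
  by rewrite /p -mulr_suml divff //; exact: lt0r_neq0.
have sq : \sum_a q a = 1.
  by rewrite /q -mulr_suml divff //; exact: lt0r_neq0.
have sk : \sum_a klterm uu s a = \sum_a e a.
  have z : \sum_a tau * (U - U') * (p a - q a) = 0.
    by rewrite -mulr_sumr sumrB sp sq subrr mulr0.
  by rewrite (eq_bigr _ (fun a _ => ek a)) big_split /= z addr0.
rewrite sk; split; first by apply: sumr_ge0 => a _.
move=> h0 a.
have := @psumr_eq0P _ _ xpredT e (fun a _ => e0 a) h0 a isT.
rewrite /e => /eqP; rewrite mulf_eq0 (gt_eqF htau) /= => /eqP h.
have g1 : 0 <= U * f1 a.
  by apply: mulr_ge0; [exact: ltW| have := (kl_pt _ _ (p0 a) (q0 a)).1; rewrite /f1].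
have g2 : 0 <= U' * f2 a.
  by apply: mulr_ge0; [exact: ltW| have := (kl_pt _ _ (q0 a) (p0 a)).1; rewrite /f2].
have : U * f1 a = 0 by lra.
move/eqP; rewrite mulf_eq0 (gt_eqF U0) /= => /eqP hf1.
apply: (kl_pt _ _ (p0 a) (q0 a)).2; exact: hf1.
Qed.

Lemma inv_lemma (pi : S -> A -> R) (x : S -> R) :
  (forall s a s', 0 <= P s a s') -> (forall s a, \sum_s' P s a s' = 1) ->
  0 <= gamma < 1 ->
  (forall s a, 0 <= pi s a) -> (forall s, \sum_a pi s a = 1) ->
  (forall s', \sum_s \sum_a K s a s' * (pi s a * x s) = 0) -> forall s, x s = 0.
Proof.
move=> hP0 hP1 /andP[hg0 hg1] hpi0 hpi1 hx.
pose Q s s' := \sum_a pi s a * P s a s'.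
have Q0 : forall s s', 0 <= Q s s'.
  by move=> s s'; apply: sumr_ge0 => a _; apply: mulr_ge0.
have Q1 : forall s, \sum_s' Q s s' = 1.
  move=> s; rewrite /Q exchange_big /= -(hpi1 s); apply: eq_bigr => a _.
  by rewrite -mulr_sumr hP1 mulr1.
have es : forall s s', \sum_a K s a s' * (pi s a * x s)
    = x s * ((s == s')%:R - gamma * Q s s').
  move=> s s'.
  transitivity (x s * ((s == s')%:R * \sum_a pi s a - gamma * Q s s')); last first.
    by rewrite hpi1 mulr1.
  rewrite /Q !mulr_sumr -sumrB mulr_sumr; apply: eq_bigr => a _; rewrite /Kmat; ring.
have ex : forall s', x s' = gamma * \sum_s x s * Q s s'.
  move=> s'; have := hx s'; rewrite (eq_bigr _ (fun s _ => es s s')).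
  rewrite (bigD1 s') //= eqxx.
  have -> : \sum_(s | s != s') x s * ((s == s')%:R - gamma * Q s s')
     = - (gamma * \sum_(s | s != s') x s * Q s s').
    rewrite mulr_sumr -sumrN; apply: eq_bigr => s /negbTE ->; rewrite /= sub0r; ring.
  rewrite [X in _ = gamma * X](bigD1 s') //=.
  set b1 := \sum_(s | s != s') x s * Q s s'.
  move=> h; apply/eqP; rewrite -subr_eq0 -h; apply/eqP; ring.
pose N := \sum_s `|x s|.
have hN : N <= gamma * N.
  have h1 : forall s', `|x s'| <= gamma * \sum_s `|x s| * Q s s'.
    move=> s'; rewrite ex normrM ger0_norm //; apply: ler_wpM2l => //.
    apply: le_trans (ler_norm_sum _ _ _) _; apply: ler_sum => s _.
    by rewrite normrM (ger0_norm (Q0 s s')).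
  apply: le_trans (ler_sum _ (fun s' _ => h1 s')) _.
  rewrite -mulr_sumr exchange_big /= /N; apply: ler_wpM2l => //.
  apply: ler_sum => s _; by rewrite -mulr_sumr Q1 mulr1.
have N0 : 0 <= N by apply: sumr_ge0.
have : N = 0.
  apply/le_anti/andP; split => //.
  have : (1 - gamma) * N <= 0 by rewrite mulrBl mul1r subr_le0.
  by rewrite pmulr_rle0 // subr_gt0.
move=> /(@psumr_eq0P _ _ xpredT (fun s => `|x s|) (fun s _ => normr_ge0 (x s))) h s.
by apply/eqP; rewrite -normr_eq0; apply/eqP; apply: h.
Qed.

End MDP2.
Arguments klterm {R S A} tau ustar uu s a.
Arguments bvec {R S A} P gamma u s'.
Arguments F1 {R S A P r gamma tau alpha} halpha {vstar ustar} hsad s'.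
Arguments deriv_eq {R S A P r gamma tau alpha c} htau halpha hc1 {vstar ustar} hsad {vv uu}.
Arguments kl_state {R S A P r gamma tau alpha} htau {vstar ustar} hsad {uu s}.
Arguments inv_lemma {R S A P gamma pi x}.
Arguments bvecB {R S A P gamma} x y s'.

Theorem lemma3p2 (R : realType) (S A : finType)
    (P : S -> A -> S -> R) (r : S -> A -> R) (gamma tau alpha c : R)
    (hP0 : forall s a s', 0 <= P s a s')
    (hP1 : forall s a, \sum_(s' : S) P s a s' = 1)
    (hr : forall s a, 0 <= r s a)
    (hgamma : 0 < gamma < 1) (htau : 0 < tau) (halpha : 0 < alpha)
    (hc : 0 < c < 1)
    (vstar : S -> R) (ustar : S -> A -> R)
    (hsaddle : is_saddle alpha tau gamma P r vstar ustar)
    (t0 t1 : R) (ht : t0 < t1)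
    (v : R -> S -> R) (u : R -> S -> A -> R)
    (htraj : is_trajectory alpha tau gamma c P r t0 t1 v u) :
  (forall t, t0 < t < t1 ->
     derivable (fun x => Lc alpha tau c vstar ustar (v x) (u x)) t 1 /\
     derive1 (fun x => Lc alpha tau c vstar ustar (v x) (u x)) t <= 0) /\
  ((forall t, t0 < t < t1 ->
      derive1 (fun x => Lc alpha tau c vstar ustar (v x) (u x)) t = 0) ->
   forall t, t0 < t < t1 -> v t = vstar /\ u t = ustar).
Proof.
have hc1 : 1 - c != 0.
  by apply: lt0r_neq0; rewrite subr_gt0; case/andP: hc.
have hAc : (exists a0 : A, True) \/ (A -> False).
  case: (pickP (@predT A)) => [a0 _|hA]; first by left; exists a0.
  by right => a; have := hA a.
have hus := hsaddle.1.
have key : forall t, t0 < t < t1 ->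
  is_derive t 1 (fun x => Lc alpha tau c vstar ustar (v x) (u x))
   (- (alpha * \sum_s (v t s - vstar s) ^+ 2)
    - \sum_s \sum_a klterm tau ustar (u t) s a).
  move=> t ht'.
  have [hu [hv hud]] := htraj t ht'.
  have iv : forall s', is_derive t 1 (fun x => v x s') (v_rhs alpha gamma P (v t) (u t) s').
    move=> s'; apply: DeriveDef; first exact: (hv s').1.
    by rewrite -derive1E; exact: (hv s').2.
  have iu : forall s a, is_derive t 1 (fun x => u x s a)
                           (u_rhs tau gamma c P r (v t) (u t) s a).
    move=> s a; apply: DeriveDef; first exact: (hud s a).1.
    by rewrite -derive1E; exact: (hud s a).2.
  have hU : forall s, 0 < utilde (u t) s \/ (A -> False).
    move=> s; case: hAc => [[a0 _]|hA]; last by right.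
    by left; apply: (sum_pos a0); exact: hu.
  rewrite -(deriv_eq htau halpha hc1 hsaddle hu hU).
  rewrite /Lc; apply: isdD.
    apply: isdMl; apply: isd_sum => s; apply: isd_sq; exact: iv.
  apply: isdMl; apply: isdD.
    apply: isd_sum => s; apply: isd_sum => a; apply: (isd_kl _ _ _ _ _ (iu s a)).
    by left; split; [exact: hus | exact: hu].
  apply: isdMl; apply: isd_sum => s.
  have iU : is_derive t 1 (fun y => utilde (u y) s)
      (\sum_a u_rhs tau gamma c P r (v t) (u t) s a).
    rewrite /utilde; apply: isd_sum => a; exact: iu.
  apply: (isd_kl _ _ _ _ _ iU).
  case: hAc => [[a0 _]|hA].
    left; split; [exact: (sum_pos a0) | exact: (sum_pos a0)].
  right; split; last by apply: big1 => a; case: (hA a).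
  move=> y; rewrite /utilde big1; last by move=> a; case: (hA a).
  by rewrite big1 //; move=> a; case: (hA a).
have nonneg : forall t, t0 < t < t1 ->
    0 <= \sum_s (v t s - vstar s) ^+ 2 /\
    (forall s, 0 <= \sum_a klterm tau ustar (u t) s a).
  move=> t ht'; have [hu _] := htraj t ht'; split.
    by apply: sumr_ge0 => s _; exact: sqr_ge0.
  by move=> s; exact: (kl_state htau hsaddle (hu s)).1.
split.
  move=> t ht'; have K := key t ht'; split; first exact: ex_derive.
  rewrite derive1E derive_val.
  have [n1 n2] := nonneg t ht'.
  have n3 : 0 <= \sum_s \sum_a klterm tau ustar (u t) s a by apply: sumr_ge0 => s _.
  have n4 : 0 <= alpha * \sum_s (v t s - vstar s) ^+ 2 by apply: mulr_ge0 => //; exact: ltW.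
  by rewrite -opprD oppr_le0; apply: addr_ge0.
move=> hD.
have zero : forall t, t0 < t < t1 ->
   v t = vstar /\ (forall s a, u t s a / utilde (u t) s = ustar s a / utilde ustar s).
  move=> t ht'; have K := key t ht'.
  have := hD t ht'; rewrite derive1E derive_val => h0.
  have [n1 n2] := nonneg t ht'.
  have n3 : 0 <= \sum_s \sum_a klterm tau ustar (u t) s a by apply: sumr_ge0 => s _.
  have n4 : 0 <= alpha * \sum_s (v t s - vstar s) ^+ 2 by apply: mulr_ge0 => //; exact: ltW.
  have hs : alpha * \sum_s (v t s - vstar s) ^+ 2 + \sum_s \sum_a klterm tau ustar (u t) s a == 0.
    by rewrite -oppr_eq0 opprD h0.
  move: hs; rewrite paddr_eq0 // => /andP[/eqP e1 /eqP e2].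
  have [hu _] := htraj t ht'.
  split.
    apply: funext => s; move: e1 => /eqP; rewrite mulf_eq0 (gt_eqF halpha) /= => /eqP e1.
    have := @psumr_eq0P _ _ xpredT (fun s => (v t s - vstar s) ^+ 2)
       (fun s _ => sqr_ge0 _) e1 s isT.
    by move/eqP; rewrite sqrf_eq0 subr_eq0 => /eqP.
  move=> s a.
  have := @psumr_eq0P _ _ xpredT (fun s => \sum_a klterm tau ustar (u t) s a)
       (fun s _ => n2 s) e2 s isT.
  by move/((kl_state htau hsaddle (hu s)).2); apply.
move=> t ht'.
have [vt pit] := zero t ht'.
split => //.
have [hu [hv _]] := htraj t ht'.
have dv0 : forall s', v_rhs alpha gamma P (v t) (u t) s' = 0.
  move=> s'; rewrite -(hv s').2 derive1E.
  have nt : \forall z \near t, v z s' = vstar s'.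
    have := @near_in_itvoo _ t0 t1 t; rewrite in_itv /= => /(_ ht').
    apply: filterS => z; rewrite in_itv /= => hz.
    by have [-> _] := zero z hz.
  rewrite (@near_eq_derive _ _ _ (fun z => v z s') (fun _ => vstar s') t 1 nt).
  exact: derive_cst.
have bz : forall s', bvec P gamma (fun s a => u t s a - ustar s a) s' = 0.
  move=> s'; have h := dv0 s'; rewrite /v_rhs vt in h.
  have hb : bvec P gamma (u t) s' = alpha * vstar s'.
    move: h => /eqP; rewrite oppr_eq0 subr_eq0 => /eqP ->.
    rewrite mulrA divff ?mul1r //; exact: lt0r_neq0.
  by rewrite bvecB hb -(F1 halpha hsaddle s') subrr.
case: hAc => [[a0 _]|hA]; last first.
  by apply: funext => s; apply: funext => a; case: (hA a).
have U'0 : forall s, 0 < utilde ustar s by move=> s; exact: (sum_pos a0).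
have ut : forall s a, u t s a = utilde (u t) s * (ustar s a / utilde ustar s).
  move=> s a; rewrite -pit mulrC mulfVK //; apply: lt0r_neq0; exact: (sum_pos a0).
have hg' : 0 <= gamma < 1 by case/andP: hgamma => g0 g1; rewrite (ltW g0) g1.
have x0 : forall s, utilde (u t) s - utilde ustar s = 0.
  apply: (@inv_lemma _ _ _ P gamma (fun s a => ustar s a / utilde ustar s)
           (fun s => utilde (u t) s - utilde ustar s) hP0 hP1 hg').
  - by move=> s a; apply: divr_ge0; apply: ltW.
  - move=> s; rewrite -mulr_suml -/(utilde ustar s) divff //; exact: lt0r_neq0.
  - move=> s'; rewrite -[RHS](bz s'); apply: eq_bigr => s _; apply: eq_bigr => a _.
    congr (_ * _); rewrite [u t s a]ut; field; exact: lt0r_neq0.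
apply: funext => s; apply: funext => a.
rewrite ut; move/eqP: (x0 s); rewrite subr_eq0 => /eqP ->.
field; exact: lt0r_neq0.
Qed.
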